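(* Let $p$ be an odd prime and let $\alpha_0\in\mathbb{Q}_p$ have an infinite Browkin $p$-adic continued fraction expansion $[b_0,b_1,b_2,\ldots]$. Define $A_{-2}=0$, $A_{-1}=1$, $A_i=b_iA_{i-1}+A_{i-2}$ and $B_{-2}=1$, $B_{-1}=0$, $B_i=b_iB_{i-1}+B_{i-2}$ for $i\ge 0$. Then $\lvert A_n\rvert_\infty<\lvert A_n\rvert_p$ and $\lvert B_n\rvert_\infty<\lvert B_n\rvert_p$ for all sufficiently large $n$.
   Context: $\lvert\cdot\rvert_p$ denotes the $p$-adic absolute value and $\lvert\cdot\rvert_\infty$ the usual archimedean absolute value on $\mathbb{Q}$. Every $x\in\mathbb{Q}_p$ has a unique expansion $x=\sum_{i\ge r}a_ip^i$ with $r\in\mathbb{Z}$ and $a_i\in\{-\frac{p-1}{2},\ldots,\frac{p-1}{2}\}$; Browkin's function is $s(x)=\sum_{i=r}^{0}a_ip^i$ (so $s(x)=0$ if $r>0$). The Browkin continued fraction expansion $[b_0,b_1,\ldots]$ of $\alpha_0$ is obtained by iterating $b_i=s(\alpha_i)$ and $\alpha_{i+1}=1/(\alpha_i-b_i)$ as long as $\alpha_i\neq b_i$ (if $\alpha_i=b_i$ the expansion stops). *)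

(* Defs.v *)
(* Q_p is modelled as Cauchy sequences of rationals for the
   p-adic absolute value, compared up to the usual equivalence. *)
From mathcomp Require Import all_boot all_order all_algebra.
Set Implicit Arguments. Unset Strict Implicit. Unset Printing Implicit Defensive.
Import Order.TTheory GRing.Theory Num.Theory.
Local Open Scope ring_scope.

Definition padic_val (p : nat) (q : rat) : int :=
  (logn p `|numq q|%N)%:Z - (logn p `|denq q|%N)%:Z.

Definition padic_abs (p : nat) (q : rat) : rat :=
  if q == 0 then 0 else (p%:Q) ^ (- padic_val p q).

Definition padic_cauchy (p : nat) (u : nat -> rat) : Prop :=
  forall e : rat, 0 < e -> exists N : nat, forall m n : nat,
    (N <= m)%N -> (N <= n)%N -> padic_abs p (u m - u n) < e.

Definition padic_eq (p : nat) (u w : nat -> rat) : Prop :=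
  forall e : rat, 0 < e -> exists N : nat, forall n : nat,
    (N <= n)%N -> padic_abs p (u n - w n) < e.

(* x = sum_{i >= r} a_i p^i  with digit a_i stored at a (i - r) *)
Definition padic_expansion (p : nat) (x : nat -> rat) (r : int) (a : nat -> int) : Prop :=
  padic_eq p x (fun N => \sum_(0 <= j < N) (a j)%:~R * (p%:Q) ^ (r + j%:Z)).

Definition balanced_digits (p : nat) (a : nat -> int) : Prop :=
  forall j, 2%:Z * `|a j| <= (p%:Z - 1).

(* Browkin's s(x) = sum_{i=r}^{0} a_i p^i  (0 if r > 0) *)
Definition browkin_s_of (p : nat) (r : int) (a : nat -> int) : rat :=
  if r <= 0 then \sum_(0 <= j < `|1 - r|%N) (a j)%:~R * (p%:Q) ^ (r + j%:Z)
  else 0.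

Definition is_browkin_s (p : nat) (x : nat -> rat) (y : rat) : Prop :=
  exists (r : int) (a : nat -> int),
    balanced_digits p a /\ padic_expansion p x r a /\ y = browkin_s_of p r a.

(* Shifted sequences: contA' b 0 = A_{-2}, contA' b 1 = A_{-1}, contA' b (n+2) = A_n *)
Fixpoint contAB (b : nat -> rat) (n : nat) : (rat * rat) * (rat * rat) :=
  (* returns ((A_{n-2}, A_{n-1}), (B_{n-2}, B_{n-1})) *)
  match n with
  | 0 => ((0, 1), (1, 0))
  | n'.+1 => let: ((a2, a1), (b2, b1)) := contAB b n' in
             ((a1, b n' * a1 + a2), (b1, b n' * b1 + b2))
  end.

Definition contA (b : nat -> rat) (n : nat) : rat := (contAB b n.+1).1.2.
Definition contB (b : nat -> rat) (n : nat) : rat := (contAB b n.+1).2.2.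

(* Main.v *)
Require Import Defs.
From mathcomp Require Import all_boot all_order all_algebra.
From mathcomp Require Import zify ring lra.
From Stdlib Require Import Classical.
Import Order.TTheory GRing.Theory Num.Theory.
Local Open Scope ring_scope.

Section Padic.
Variable p : nat.
Hypothesis pp : prime p.

Lemma val_frac (u w : int) : u != 0 -> w != 0 ->
  padic_val p (u%:~R / w%:~R) = (logn p `|u|)%:Z - (logn p `|w|)%:Z.
Proof.
move=> u0 w0; set x := (u%:~R / w%:~R : rat).
have x0 : x != 0 by rewrite /x mulf_neq0 ?invr_eq0 ?intr_eq0.
have e : numq x * w = u * denq x.
  apply/eqP; rewrite -(eqr_int rat) !rmorphM /=.
  rewrite -eqr_div ?intr_eq0 ?denq_neq0 //. by rewrite divq_num_den eq_refl.
have := congr1 absz e; rewrite !abszM => e2.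
have hn : (0 < `|numq x|)%N by rewrite absz_gt0 numq_eq0.
have hd : (0 < `|denq x|)%N by rewrite absz_gt0 denq_neq0.
have hu : (0 < `|u|)%N by rewrite absz_gt0.
have hw : (0 < `|w|)%N by rewrite absz_gt0.
have := congr1 (logn p) e2; rewrite !lognM // => e3.
rewrite /padic_val; apply/eqP; rewrite subr_eq addrAC eq_sym subr_eq -!PoszD.
by apply/eqP; congr Posz; rewrite addnC e3 addnC.
Qed.
Local Notation v := (padic_val p).

Lemma pgt1 : (1 < p)%N. Proof. exact: prime_gt1. Qed.

Lemma val_def x : v x = (logn p `|numq x|)%:Z - (logn p `|denq x|)%:Z.
Proof. by []. Qed.

Lemma rat_nd x : x = (numq x)%:~R / (denq x)%:~R.
Proof. by rewrite divq_num_den. Qed.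

Lemma val_mul x y : x != 0 -> y != 0 -> v (x*y) = v x + v y.
Proof.
move=> hx hy.
have -> : x * y = (numq x * numq y)%:~R / (denq x * denq y)%:~R.
  by rewrite !rmorphM /= {1}(rat_nd x) {1}(rat_nd y); field; rewrite !intr_eq0 !denq_neq0.
rewrite val_frac ?mulf_neq0 ?numq_eq0 ?denq_neq0 // !abszM !lognM ?absz_gt0 ?numq_eq0 ?denq_neq0 //.
rewrite !val_def !PoszD; lia.
Qed.

Lemma val_inv x : x != 0 -> v (x^-1) = - v x.
Proof.
move=> hx.
have -> : x^-1 = (denq x)%:~R / (numq x)%:~R.
  by rewrite {1}(rat_nd x) invf_div.
rewrite val_frac ?numq_eq0 ?denq_neq0 // val_def; lia.
Qed.

Lemma val_opp x : v (- x) = v x.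
Proof. by rewrite !val_def numqN denqN abszN. Qed.

Lemma val_int (n : int) : n != 0 -> v (n%:~R) = (logn p `|n|)%:Z.
Proof.
move=> h; have := @val_frac n 1 h (oner_neq0 _); rewrite divr1 => ->.
by rewrite absz1 logn1 subr0.
Qed.

Lemma logn_add (a b : int) : a != 0 -> b != 0 -> a + b != 0 ->
  (minn (logn p (absz a)) (logn p (absz b)) <= logn p (absz (a + b)%R))%N.
Proof.
move=> ha hb hab; set m := minn _ _.
rewrite -pfactor_dvdn ?absz_gt0 //.
have : ((p ^ m)%:Z %| a + b)%Z.
  apply: rpredD; rewrite dvdzE /=;
  rewrite (@pfactor_dvdn p m) ?absz_gt0 // /m ?geq_minl ?geq_minr //.
by rewrite dvdzE.
Qed.

Lemma val_add x y (k : int) : x + y != 0 -> (x != 0 -> k <= v x) -> (y != 0 -> k <= v y) -> k <= v (x + y).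
Proof.
have [->|hx] := eqVneq x 0; first by rewrite add0r => hxy _ H; apply: H.
have [->|hy] := eqVneq y 0; first by rewrite addr0 => hxy H _; apply: H.
move=> hxy /(_ isT) kx /(_ isT) ky.
have E : x + y = (numq x * denq y + numq y * denq x)%:~R / (denq x * denq y)%:~R.
  by rewrite !rmorphD !rmorphM /= {1}(rat_nd x) {1}(rat_nd y); field; rewrite !intr_eq0 !denq_neq0.
have hS : numq x * denq y + numq y * denq x != 0.
  by apply: contraNneq hxy => e; rewrite E e mul0r.
rewrite E.
rewrite val_frac ?mulf_neq0 ?denq_neq0 //.
have := @logn_add (numq x * denq y) (numq y * denq x).
rewrite ?mulf_neq0 ?numq_eq0 ?denq_neq0 // => /(_ isT isT hS).
move: kx ky; rewrite !val_def !abszM !lognM ?absz_gt0 ?numq_eq0 ?denq_neq0 //.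
move=> kx ky hm.
have : (minn (logn p `|numq x| + logn p `|denq y|) (logn p `|numq y| + logn p `|denq x|))%:Z <= (logn p `|numq x * denq y + numq y * denq x|)%:Z by rewrite lez_nat.
rewrite !PoszD; lia.
Qed.

Lemma val0 : v 0 = 0.
Proof. by rewrite /padic_val /= logn0 logn1. Qed.

Definition small1 (z : rat) := z = 0 \/ 1 <= v z.

Lemma val_strict x y : x != 0 -> y != 0 -> v x < v y -> x + y != 0 /\ v (x + y) = v x.
Proof.
move=> hx hy lt.
have hxy : x + y != 0.
  apply/eqP => e; have ey : y = - x by apply/eqP; rewrite -addr_eq0 addrC e.
  by move: lt; rewrite ey val_opp ltxx.
split=> //; apply/eqP; rewrite eq_le; apply/andP; split; last first.
  by apply: val_add => // _; apply: ltW.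
rewrite leNgt; apply/negP => lt2.
have : v x + 1 <= v ((x + y) + - y).
  apply: val_add; first by rewrite addrK.
    by move=> _; rewrite -ltzD1 ltrD2r.
  by move=> _; rewrite val_opp -ltzD1 ltrD2r.
by rewrite addrK -ltzD1 ltrD2r ltxx.
Qed.

Lemma small1_add x y : small1 x -> small1 y -> small1 (x + y).
Proof.
move=> hx hy; have [e|ne] := eqVneq (x + y) 0; first by left.
right; apply: val_add => // [h|h]; [case: hx => [e|//]|case: hy => [e|//]];
  by rewrite e eqxx in h.
Qed.

Lemma small1_opp x : small1 x -> small1 (- x).
Proof. by case=> [->|h]; [left; rewrite oppr0|right; rewrite val_opp]. Qed.

Lemma dom x w : x != 0 -> v x <= 0 -> small1 w -> x + w != 0 /\ v (x + w) = v x.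
Proof.
move=> hx vx [->|hw]; first by rewrite addr0.
have w0 : w != 0 by apply/eqP => e; move: hw; rewrite e val0.
apply: val_strict => //; exact: (le_lt_trans vx (lt_le_trans ltr01 hw)).
Qed.

Lemma small1_int (n : int) : (p%:Z %| n)%Z -> small1 n%:~R.
Proof.
have [->|n0] := eqVneq n 0; first by left.
move=> d; right; rewrite val_int // lez_nat logn_gt0 mem_primes pp absz_gt0 n0 /=.
by move: d; rewrite dvdzE.
Qed.

Lemma val_digit (n : int) : n != 0 -> 2%:Z * `|n| <= p%:Z - 1 -> v n%:~R = 0.
Proof.
move=> n0 h; rewrite val_int //; apply/eqP; rewrite eqz_nat -leqn0 leqNgt logn_gt0 mem_primes pp absz_gt0 n0 /=.
apply/negP => /(dvdn_leq); rewrite absz_gt0 n0 => /(_ isT) hl.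
have : p%:Z <= `|n| by rewrite -abszE lez_nat.
move: h; lia.
Qed.

Lemma val_p : v p%:Q = 1.
Proof.
have := @val_int p%:Z; rewrite eqz_nat -lt0n prime_gt0 // => /(_ isT) /=.
by rewrite (@logn_prime p p) // eqxx.
Qed.

Lemma abs_lt1 z : padic_abs p z < 1 -> small1 z.
Proof.
rewrite /padic_abs; have [->|z0] := eqVneq z 0; first by left.
move=> h; right; move: h; rewrite -(expr0z (p%:Q)) ltr_eXz2l; last by rewrite ltr1n pgt1.
rewrite oppr_lt0 => h; by rewrite -[1]add0r lezD1.
Qed.

Lemma abs_ge z (m : nat) : z != 0 -> v z <= - m%:Z -> (p%:Q) ^+ m <= padic_abs p z.
Proof.
move=> z0 h; rewrite /padic_abs (negbTE z0) exprnP ler_eXz2l; last by rewrite ltr1n pgt1.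
by rewrite lerNr.
Qed.

Definition T (a : nat -> int) (K : nat) : rat :=
  \sum_(0 <= j < K.+1) (a j)%:~R * (p%:Q) ^ (- K%:Z + j%:Z).

Lemma P0 : p%:Q != 0.
Proof. by rewrite pnatr_eq0 -lt0n prime_gt0. Qed.

Lemma T_0 a : T a 0 = (a 0%N)%:~R.
Proof. by rewrite /T big_nat1 /= mulr1. Qed.

Lemma T_rec a K : T a K.+1 = (a K.+1)%:~R + T a K / p%:Q.
Proof.
rewrite /T big_nat_recr //= addrC; congr (_ + _).
  by rewrite addrC subrr expr0z mulr1.
rewrite mulr_suml; apply: eq_bigr => j _.
rewrite -mulrA; congr (_ * _).
rewrite -exprN1 -expfzDr ?P0 //; congr (_ ^ _); lia.
Qed.

Lemma bs_T r a : r <= 0 -> browkin_s_of p r a = T a (absz r).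
Proof.
move=> hr; rewrite /browkin_s_of hr /T.
have -> : (`|1 - r|)%N = (absz r).+1 by lia.
apply: eq_bigr => j _; congr (_ * _ ^ _); lia.
Qed.

Lemma digit_bound a j : balanced_digits p a -> `|(a j)%:~R : rat| <= (p%:Q - 1) / 2.
Proof.
move=> /(_ j) h.
have : ((2%:Z * `|a j|)%:~R : rat) <= (p%:Z - 1)%:~R by rewrite ler_int.
rewrite intrM intrB intr_norm /= => h2.
rewrite ler_pdivlMr //; lra.
Qed.

Lemma T_arch a K : balanced_digits p a -> `|T a K| <= p%:Q / 2.
Proof.
move=> hb; have p1 : 1 < p%:Q by rewrite ltr1n pgt1.
elim: K => [|K IH]; first by rewrite T_0; apply: le_trans (@digit_bound a 0 hb) _; lra.
rewrite T_rec; apply: le_trans (ler_normD _ _) _.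
have h1 := @digit_bound a K.+1 hb.
have h2 : `|T a K / p%:Q| <= 1 / 2.
  rewrite normrM normfV (@ger0_norm _ p%:Q) ?ler0n // ler_pdivrMr; last lra.
  lra.
lra.
Qed.

Lemma T_val a K : balanced_digits p a -> T a K = 0 \/ v (T a K) <= 0.
Proof.
move=> hb.
have dig : forall j, (a j)%:~R = 0 :> rat \/ ((a j)%:~R != 0 :> rat /\ v (a j)%:~R = 0).
  move=> j; have [->|nz] := eqVneq (a j) 0; first by left.
  by right; split; [rewrite intr_eq0|apply: val_digit].
elim: K => [|K IH]; first by rewrite T_0; case: (dig 0%N) => [->|[_ ->]]; [left|right].
rewrite T_rec.
case: IH => [->|hv]; first by rewrite mul0r addr0; case: (dig K.+1) => [->|[_ ->]]; [left|right].
have [T0|T0] := eqVneq (T a K) 0; first by rewrite T0 mul0r addr0; case: (dig K.+1) => [->|[_ ->]]; [left|right].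
have hq : v (T a K / p%:Q) = v (T a K) - 1.
  by rewrite val_mul ?invr_eq0 ?P0 // val_inv ?P0 // val_p.
have nq : T a K / p%:Q != 0 by rewrite mulf_neq0 ?invr_eq0 ?P0.
case: (dig K.+1) => [->|[ad hd]]; first by right; rewrite add0r hq; lia.
have lt : v (T a K / p%:Q) < v (a K.+1)%:~R by rewrite hq hd; lia.
right; rewrite addrC; have [_ ->] := val_strict _ _ nq ad lt.
by rewrite hq; lia.
Qed.

Lemma browkin_b x y : is_browkin_s p x y -> `|y| <= p%:Q / 2 /\ (y = 0 \/ v y <= 0).
Proof.
move=> [r [a [hb [_ ->]]]].
have [hr|hr] := lerP r 0.
  by rewrite bs_T //; split; [apply: T_arch|apply: T_val].
rewrite /browkin_s_of (leNgt r) hr /= normr0; split; last by left.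
by apply: divr_ge0; rewrite ?ler0n.
Qed.

Lemma tail_small (a : nat -> int) (r : int) m n :
  (forall j, (m <= j)%N -> 1 <= r + j%:Z) ->
  small1 (\sum_(m <= j < n) (a j)%:~R * (p%:Q) ^ (r + j%:Z)).
Proof.
move=> hj; rewrite big_nat_cond; apply: big_ind; first by left.
  exact: small1_add.
move=> j /andP [/andP [h _] _].
have [k ek] : exists k : nat, r + j%:Z = k%:Z by exists (absz (r + j%:Z)); have := hj j h; lia.
have k1 : (0 < k)%N by have := hj j h; rewrite ek; lia.
rewrite ek -exprnP -natrX -[((p ^ k)%N)%:R]/(((p ^ k)%N)%:Z)%:~R -intrM.
apply: small1_int; apply: dvdz_mull; rewrite dvdzE /=; exact: dvdn_exp.
Qed.

Lemma browkin_close x y : is_browkin_s p x y -> exists N, forall n, (N <= n)%N -> small1 (x n - y).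
Proof.
move=> [r [a [hb [he ->]]]].
have [N1 h1] := he 1 ltr01.
exists (N1 + `|1 - r|)%N => n hn.
have -> : x n - browkin_s_of p r a =
  (x n - \sum_(0 <= j < n) (a j)%:~R * (p%:Q) ^ (r + j%:Z)) +
  (\sum_(0 <= j < n) (a j)%:~R * (p%:Q) ^ (r + j%:Z) - browkin_s_of p r a) by rewrite addrA subrK.
apply: small1_add; first by apply: abs_lt1; apply: h1; lia.
rewrite /browkin_s_of; case: ifP => hr.
  rewrite (@big_cat_nat _ _ _ `|1 - r|%N) //=; last by lia.
  rewrite addrAC subrr add0r; apply: tail_small => j hj; lia.
rewrite subr0; apply: tail_small => j _; move/negbT: hr; rewrite -ltNge; lia.
Qed.

Lemma nonnull (x : nat -> rat) c : padic_cauchy p x -> ~ padic_eq p x (fun _ => c) ->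
  exists N, forall n, (N <= n)%N -> x n != c.
Proof.
move=> hc hne.
have [e [e0 he]] : exists e, 0 < e /\ forall N, exists n, (N <= n)%N /\ ~ (padic_abs p (x n - c) < e).
  apply: NNPP => H; apply: hne => e e0.
  apply: NNPP => H2; apply: H; exists e; split => // N.
  apply: NNPP => H3; apply: H2; exists N => n hn.
  apply: NNPP => H4; apply: H3; exists n; split => //.
have [N hN] := hc e e0.
exists N => m hm; apply/eqP => em.
have [n [hn hnc]] := he N; apply: hnc.
by have := hN n m hn hm; rewrite em.
Qed.

Lemma chain (alpha : nat -> nat -> rat) (b : nat -> rat) :
  (forall i, padic_cauchy p (alpha i)) ->
  (forall i, is_browkin_s p (alpha i) (b i)) ->
  (forall i, ~ padic_eq p (alpha i) (fun _ => b i)) ->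
  (forall i, padic_eq p (alpha i.+1) (fun n => (alpha i n - b i)^-1)) ->
  forall i, b i.+1 != 0 /\ v (b i.+1) <= -1.
Proof.
move=> hc hbs hne hrec i.
have [N1 h1] := browkin_close _ _ (hbs i).
have [N2 h2] := nonnull _ _ (hc i) (hne i).
have [N3 h3] := hrec i 1 ltr01.
have [N4 h4] := browkin_close _ _ (hbs i.+1).
pose n := (N1 + N2 + N3 + N4)%N.
pose d := alpha i n - b i.
have d0 : d != 0 by rewrite subr_eq0; apply: h2; rewrite /n; lia.
have vd : 1 <= v d.
  by case: (h1 n ltac:(rewrite /n; lia)) => // e; rewrite /d e eqxx in d0.
pose z := alpha i.+1 n.
have s3 : small1 (z - d^-1) by apply: abs_lt1; apply: (h3 n); rewrite /n; lia.
have di0 : d^-1 != 0 by rewrite invr_eq0.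
have vdi : v d^-1 <= 0 by rewrite val_inv //; lia.
have [z0 vz] : z != 0 /\ v z = v d^-1.
  by have := dom _ _ di0 vdi s3; rewrite addrC subrK.
have s4 : small1 (-(z - b i.+1)) by apply: small1_opp; apply: (h4 n); rewrite /n; lia.
have vz0 : v z <= 0 by rewrite vz.
have := dom _ _ z0 vz0 s4; rewrite opprB addrC subrK => -[b0 vb]; split => //.
by rewrite vb vz val_inv //; lia.
Qed.

Lemma U_rec (b : nat -> rat) k : (contAB b k.+2).1.2 = b k.+1 * (contAB b k.+1).1.2 + (contAB b k).1.2.
Proof. by rewrite /=; case: (contAB b k) => [[? ?] [? ?]]. Qed.

Lemma W_rec (b : nat -> rat) k : (contAB b k.+2).2.2 = b k.+1 * (contAB b k.+1).2.2 + (contAB b k).2.2.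
Proof. by rewrite /=; case: (contAB b k) => [[? ?] [? ?]]. Qed.

Lemma pstep (X : nat -> rat) c k : X k.+1 != 0 -> (X k = 0 \/ v (X k.+1) < v (X k)) ->
  X k.+2 = c * X k.+1 + X k -> c != 0 -> v c <= -1 ->
  X k.+2 != 0 /\ v (X k.+2) <= v (X k.+1) - 1.
Proof.
move=> x1 hk -> c0 vc.
have y0 : c * X k.+1 != 0 by rewrite mulf_neq0.
have vy : v (c * X k.+1) = v c + v (X k.+1) by rewrite val_mul.
have [->|x0] := eqVneq (X k) 0; first by rewrite addr0 vy; split => //; lia.
case: hk => [e|lt]; first by rewrite e eqxx in x0.
have lt2 : v (c * X k.+1) < v (X k) by rewrite vy; lia.
have [s ->] := val_strict _ _ y0 x0 lt2; split => //; rewrite vy; lia.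
Qed.

Lemma val1 : v 1 = 0.
Proof. by rewrite /padic_val /= logn1. Qed.

Lemma W_inv (b : nat -> rat) : (forall i, b i.+1 != 0 /\ v (b i.+1) <= -1) -> forall k,
  (contAB b k.+1).2.2 != 0 /\ ((contAB b k).2.2 = 0 \/ v (contAB b k.+1).2.2 < v (contAB b k).2.2)
  /\ v (contAB b k.+1).2.2 <= - k%:Z.
Proof.
move=> hb; elim=> [|k [n0 [h hv]]].
  by rewrite /= mulr0 add0r val1; split; [exact: oner_neq0|split; [left|]].
have [s1 s2] := pstep (fun k => (contAB b k).2.2) (b k.+1) k n0 h (W_rec b k) (hb k).1 (hb k).2.
split=> //; split; [right; lia|lia].
Qed.

Lemma U_inv (b : nat -> rat) : (forall i, b i.+1 != 0 /\ v (b i.+1) <= -1) ->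
  (b 0%N = 0 \/ v (b 0%N) <= 0) -> forall k,
  (contAB b k.+2).1.2 != 0 /\ ((contAB b k.+1).1.2 = 0 \/ v (contAB b k.+2).1.2 < v (contAB b k.+1).1.2)
  /\ v (contAB b k.+2).1.2 <= - k%:Z.
Proof.
move=> hb hb0; elim=> [|k [n0 [h hv]]].
  have U1 : (contAB b 1).1.2 = b 0%N by rewrite /= mulr1 addr0.
  have U0 : (contAB b 0).1.2 = 1 by [].
  rewrite U_rec U1 U0.
  have [->|b00] := eqVneq (b 0%N) 0.
    by rewrite mulr0 add0r val1; split; [exact: oner_neq0|split; [left|]].
  have vb0 : v (b 0%N) <= 0 by case: hb0 => // e; rewrite e eqxx in b00.
  have [b10 vb1] := hb 0%N.
  have y0 : b 1%N * b 0%N != 0 by rewrite mulf_neq0.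
  have vy : v (b 1%N * b 0%N) = v (b 1%N) + v (b 0%N) by rewrite val_mul.
  have lt : v (b 1%N * b 0%N) < v 1 by rewrite vy val1; lia.
  have [s ->] := val_strict _ _ y0 (oner_neq0 _) lt.
  by split=> //; split; [right|]; rewrite vy; lia.
have [s1 s2] := pstep (fun k => (contAB b k).1.2) (b k.+2) k.+1 n0 h (U_rec b k.+1) (hb k.+1).1 (hb k.+1).2.
split=> //; split; [right; lia|lia].
Qed.
End Padic.

Lemma arch (Q : rat) (c : nat -> rat) (X : nat -> rat) : 2 <= Q ->
  (forall i, `|c i| <= (Q + 1) / 2) -> (forall k, X k.+2 = c k.+1 * X k.+1 + X k) ->
  `|X 0%N| <= 1 -> `|X 1%N| <= Q -> forall k, `|X k| <= Q ^+ k.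
Proof.
move=> Q2 hc hrec h0 h1.
suff H : forall k, `|X k| <= Q ^+ k /\ `|X k.+1| <= Q ^+ k.+1 by move=> k; case: (H k).
elim=> [|k [ih1 ih2]]; first by rewrite expr0 expr1.
split=> //.
set t := Q ^+ k.
have t0 : 0 <= t by rewrite exprn_ge0 //; lra.
have e1 : Q ^+ k.+1 = Q * t by rewrite exprS.
have e2 : Q ^+ k.+2 = Q * (Q * t) by rewrite !exprS.
rewrite e2 hrec; rewrite e1 in ih2.
have h3 : `|c k.+1 * X k.+1| <= (Q + 1) / 2 * (Q * t).
  by rewrite normrM; apply: ler_pM => //.
have h4 := ler_normD (c k.+1 * X k.+1) (X k).
have h5 : 0 <= (Q - 2) * (Q + 1) * t by rewrite mulr_ge0 // mulr_ge0 //; lra.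
have h6 : (Q + 1) / 2 * (Q * t) + t <= Q * (Q * t).
  rewrite -subr_ge0; have -> : Q * (Q * t) - ((Q + 1) / 2 * (Q * t) + t) = (Q - 2) * (Q + 1) * t / 2 by field.
  by rewrite divr_ge0.
apply: le_trans h4 _; apply: le_trans h6; apply: lerD => //.
Qed.

Lemma natfact (q m : nat) : (2 <= q)%N -> (q ^ 3 <= m)%N -> (q ^ (m + 2) < (q + 1) ^ m)%N.
Proof.
move=> q2 hm.
have bern : forall m, (q ^ m * (q + m) <= q * (q + 1) ^ m)%N.
  elim=> [|k IH]; first by rewrite expn0 mul1n addn0 muln1.
  rewrite !expnS.
  have : (q * q ^ k <= q ^ k * (q + k))%N by rewrite mulnC leq_mul2l leq_addr orbT.
  move: IH; set A := (q ^ k)%N; set B := ((q + 1) ^ k)%N => IH h.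
  nia.
have := bern m; rewrite expnD => hb.
have qm : (0 < q ^ m)%N by rewrite expn_gt0; lia.
have : (q ^ m * q ^ 3 < q ^ m * (q + m))%N by rewrite ltn_mul2l qm /=; lia.
move: hb; set A := (q ^ m)%N; set C := (q ^ 3)%N; set B := ((q + 1) ^ m)%N.
rewrite (_ : q ^ 2 = q * q)%N; last by rewrite expnS expn1.
rewrite (_ : C = q * (q * q))%N; last by rewrite /C !expnS expn0 muln1.
nia.
Qed.

Theorem lemma2 (p : nat) (alpha : nat -> nat -> rat) (b : nat -> rat) :
  prime p -> odd p ->
  (forall i, padic_cauchy p (alpha i)) ->
  (forall i, is_browkin_s p (alpha i) (b i)) ->
  (forall i, ~ padic_eq p (alpha i) (fun _ => b i)) ->
  (forall i, padic_eq p (alpha i.+1) (fun n => (alpha i n - b i)^-1)) ->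
  exists N : nat, forall n : nat, (N <= n)%N ->
    `|contA b n| < padic_abs p (contA b n) /\
    `|contB b n| < padic_abs p (contB b n).
Proof.
move=> pp podd hc hbs hne hrec.
have hb := @chain p pp _ _ hc hbs hne hrec.
have hbb := fun i => @browkin_b p pp _ _ (hbs i).
have p3 : (3 <= p)%N.
  have : p != 2%N by apply/eqP => e; rewrite e in podd.
  have := prime_gt1 pp; lia.
set q := p.-1.
have pq : p = q.+1 by rewrite prednK // prime_gt0.
have ep : p%:Q = q%:R + 1 by rewrite pq -[q.+1]addn1 PoszD intrD.
have q2 : (2 <= q)%N by lia.
have Q2 : (2 : rat) <= q%:R by rewrite ler_nat.
have hcb : forall i, `|b i| <= (q%:R + 1) / 2 by move=> i; rewrite -ep; exact: (hbb i).1.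
have archU := @arch q%:R b (fun k => (contAB b k).1.2) Q2 hcb (U_rec b)
  ltac:(by rewrite /= normr1) ltac:(by rewrite /= mulr1 addr0; apply: le_trans (hcb 0%N) _; lra).
have archW := @arch q%:R b (fun k => (contAB b k).2.2) Q2 hcb (W_rec b)
  ltac:(by rewrite /= normr0) ltac:(by rewrite /= mulr0 add0r normr1; lra).
have hb0 : b 0%N = 0 \/ padic_val p (b 0%N) <= 0 by exact: (hbb 0%N).2.
exists (q ^ 3).+1 => n hn.
have [m em] : exists m, n = m.+1 by exists n.-1; lia.
subst n.
have key : (q%:R ^+ m.+2 : rat) < p%:Q ^+ m.
  have e1 : (q%:R + 1 : rat) = (q + 1)%N%:R by rewrite natrD.
  rewrite ep e1 -addn2 -!natrX ltr_nat; apply: natfact => //; lia.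
have [u0 [_ uv]] := @U_inv p pp b hb hb0 m.
have [w0 [_ wv]] := @W_inv p pp b hb m.+1.
split.
  rewrite /contA; apply: le_lt_trans (archU m.+2) _; apply: lt_le_trans key _.
  exact: (@abs_ge p pp _ _ u0 uv).
rewrite /contB; apply: le_lt_trans (archW m.+2) _; apply: lt_le_trans key _.
by apply: (@abs_ge p pp) => //; apply: le_trans wv _; lia.
Qed.
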